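(* Let $D$ be a finite directed graph that is essentially a tree. Then $\Delta(D)$ is vertex decomposable, and hence shellable (in the nonpure sense).
   Context: For a finite directed graph $D$ (no loops, no multiple edges), the complex of directed trees $\Delta(D)$ has the directed edges of $D$ as vertices, and its faces are the edge sets of directed forests in $D$ (vertex-disjoint unions of rooted directed trees; equivalently, edge sets in which every vertex has in-degree at most $1$ and there is no directed cycle). $D$ is essentially a tree if the undirected graph obtained by replacing every directed edge, or pair of oppositely directed edges between the same two vertices, by a single undirected edge is a tree. A simplicial complex $\Delta$ is vertex decomposable if it is a simplex, or there is a vertex $v$ (a shedding vertex) such that $\Delta\setminus v$ (faces not containing $v$) and $\mathrm{link}_\Delta v$ are vertex decomposable and no facet of $\mathrm{link}_\Delta v$ is a facet of $\Delta\setminus v$. A (possibly nonpure) complex is shellable if its facets admit a linear order $F_1,\ldots,F_k$ such that for all $i<j$ there exist $l<j$ and a vertex $v\in F_j$ with $F_i\cap F_j\subseteq F_l\cap F_j=F_j\setminus\{v\}$. *)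

(* Defs.v *)
From mathcomp Require Import all_boot.
Set Implicit Arguments. Unset Strict Implicit. Unset Printing Implicit Defensive.

Definition deletion (T : finType) (K : {set {set T}}) (v : T) : {set {set T}} :=
  [set F in K | v \notin F].

Definition link (T : finType) (K : {set {set T}}) (v : T) : {set {set T}} :=
  [set F in K | (v \notin F) && ((v |: F) \in K)].

Definition facets (T : finType) (K : {set {set T}}) : {set {set T}} :=
  [set F in K | [forall G in K, (F \subset G) ==> (G == F)]].

Definition is_vertex (T : finType) (K : {set {set T}}) (v : T) : bool :=
  [exists F in K, v \in F].

Definition is_simplex (T : finType) (K : {set {set T}}) : Prop :=
  exists S : {set T}, K = powerset S.

Inductive vertex_decomposable (T : finType) : {set {set T}} -> Prop :=
  | vd_simplex K : is_simplex K -> vertex_decomposable K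
  | vd_shed K v : is_vertex K v ->
      vertex_decomposable (deletion K v) ->
      vertex_decomposable (link K v) ->
      (forall F, F \in facets (link K v) -> F \notin facets (deletion K v)) ->
      vertex_decomposable K.

Definition shellable (T : finType) (K : {set {set T}}) : Prop :=
  exists s : seq {set T},
    perm_eq s (enum (facets K)) /\
    forall i j, i < j < size s ->
      exists l, exists v,
        [/\ l < j, v \in nth set0 s j,
            (nth set0 s i :&: nth set0 s j) \subset (nth set0 s l :&: nth set0 s j)
          & nth set0 s l :&: nth set0 s j = nth set0 s j :\ v].

(* A finite directed graph on vertex type V: a relation D with D u v meaning
   there is a directed edge u -> v; no loops means D irreflexive; a relation
   has no multiple edges. *)

Definition edge_set (V : finType) (D : rel V) : {set V * V} :=
  [set e | D e.1 e.2].

(* Since the vertices are distinct, k <= #|V|, so we can quantify over tuples. *)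
Definition has_directed_cycle (V : finType) (F : {set V * V}) : bool :=
  [exists n : 'I_#|V|.+1, exists t : n.-tuple V,
     [&& 0 < n, uniq t & cycle (fun a b => (a, b) \in F) t]].

Definition directed_forest (V : finType) (F : {set V * V}) : bool :=
  [forall v : V, #|[set u : V | (u, v) \in F]| <= 1] && ~~ has_directed_cycle F.

Definition complex_of_directed_trees (V : finType) (D : rel V) : {set {set V * V}} :=
  [set F : {set V * V} | (F \subset edge_set D) && directed_forest F].

Definition underlying (V : finType) (D : rel V) : rel V :=
  fun u v => (u != v) && (D u v || D v u).

Definition is_tree (V : finType) (G : rel V) : Prop :=
  [/\ 0 < #|V|,
      (forall x y : V, connect G x y)
    & ~ (exists c : seq V, [&& 3 <= size c, uniq c & cycle G c])].

Definition essentially_tree (V : finType) (D : rel V) : Prop :=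
  is_tree (underlying D).

(* Main.v *)
Require Import Defs.
From mathcomp Require Import all_boot.
From Stdlib Require Import Classical.
Set Implicit Arguments. Unset Strict Implicit.

Section Gen.
Variable T : finType.

Definition is_complex (K : {set {set T}}) :=
  forall F G : {set T}, F \in K -> G \subset F -> G \in K.

Lemma facetsP (K : {set {set T}}) (F : {set T}) :
  reflect (F \in K /\ forall G : {set T}, G \in K -> F \subset G -> G = F) (F \in facets K).
Proof.
rewrite /facets inE; apply: (iffP andP) => [[FK /forall_inP H]|[FK H]].
  by split=> // G GK FG; apply/eqP; apply: (implyP (H G GK)).
split=> //; apply/forall_inP => G GK; apply/implyP => FG; apply/eqP; exact: H.
Qed.

Lemma exists_facet (K : {set {set T}}) (X : {set T}) : X \in K -> exists2 F, F \in facets K & X \subset F.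
Proof.
move=> XK.
have P0 : (X \in K) && (X \subset X) by rewrite XK subxx.
case: (@arg_maxnP _ X (fun F : {set T} => (F \in K) && (X \subset F)) (fun F : {set T} => #|F|) P0) => F /andP[FK XF] Hmax.
exists F => //; apply/facetsP; split=> // G GK FG.
apply/eqP; rewrite eq_sym eqEcard FG /=.
apply: Hmax; rewrite GK /=; exact: subset_trans XF FG.
Qed.

Lemma del_complex (K : {set {set T}}) (v : T) : is_complex K -> is_complex (deletion K v).
Proof.
move=> HK F G; rewrite !inE => /andP[FK vF] GF; rewrite (HK F G) //=.
by apply: contra vF; apply: (subsetP GF).
Qed.

Lemma link_complex (K : {set {set T}}) (v : T) : is_complex K -> is_complex (link K v).
Proof.
move=> HK F G; rewrite !inE => /andP[FK /andP[vF vFK]] GF; rewrite (HK F G) //=.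
rewrite (HK (v |: F)) ?andbT; last by apply: setUS.
- by apply: contra vF; apply: (subsetP GF).
- by [].
Qed.

Lemma facet_char (K : {set {set T}}) (v : T) : is_complex K ->
  (forall F : {set T}, F \in facets (link K v) -> F \notin facets (deletion K v)) ->
  forall F : {set T}, F \in facets K <->
    (F \in facets (deletion K v) \/ exists2 G, G \in facets (link K v) & F = v |: G).
Proof.
move=> HK Hsh F; split.
  move/facetsP=> [FK Fmax]; case vF: (v \in F).
    right; exists (F :\ v); last by rewrite setD1K.
    apply/facetsP; split.
      by rewrite !inE eqxx /= setD1K // FK (HK F) // subD1set.
    move=> G; rewrite inE => /andP[GK /andP[vG vGK]] FG.
    have : v |: G = F by apply: Fmax => //; rewrite -{1}(setD1K vF); apply: setUS.
    by move=> <-; rewrite setU1K.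
  left; apply/facetsP; split; first by rewrite inE FK vF.
  by move=> G; rewrite inE => /andP[GK _]; apply: Fmax.
case=> [/facetsP[] | [G /facetsP[] ]].
  rewrite inE => /andP[FK vF] Fmax; apply/facetsP; split=> // H HK' FH.
  case vH: (v \in H); last by apply: Fmax => //; rewrite inE HK' vH.
  have Hl : H :\ v \in link K v.
    by rewrite !inE eqxx /= setD1K // HK' (HK H) // subD1set.
  case: (exists_facet Hl) => G Gf HG.
  have FG : F \subset G.
    apply: subset_trans HG; apply/subsetP => x xF; rewrite !inE (subsetP FH) // andbT.
    by apply: contraNneq vF => <-.
  have GF : G = F.
    apply: Fmax FG; move/facetsP: Gf => [+ _].
    by rewrite !inE => /andP[GK /andP[vG _]]; rewrite GK vG.
  have := Hsh _ Gf; rewrite GF => /negP; case; apply/facetsP; split; first by rewrite inE FK vF.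
  exact: Fmax.
rewrite inE => /andP[GK /andP[vG vGK]] Gmax ->; apply/facetsP; split=> // H HK' GH.
have vH : v \in H by apply: (subsetP GH); rewrite setU11.
have Hl : H :\ v \in link K v.
  by rewrite !inE eqxx /= setD1K // HK' (HK H) // subD1set.
have : H :\ v = G.
  apply: (Gmax _ Hl); apply/subsetP => x xG; rewrite !inE (subsetP GH) ?inE ?xG ?orbT // andbT.
  by apply: contraNneq vG => <-.
by move=> <-; rewrite setD1K.
Qed.


Lemma facets_powerset (S : {set T}) : perm_eq [:: S] (enum (facets (powerset S))).
Proof.
apply: uniq_perm => //; first exact: enum_uniq.
move=> F; rewrite mem_enum inE; apply/eqP/facetsP.
  move=> ->; split; first by rewrite inE subxx.
  by move=> G; rewrite inE => GS SG; apply/eqP; rewrite eqEsubset GS SG.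
case; rewrite inE => FS Fmax; apply/esym/Fmax => //; by rewrite inE subxx.
Qed.

Lemma vd_shellable (K : {set {set T}}) : vertex_decomposable K -> is_complex K -> shellable K.
Proof.
elim => {K} [K [S ->] _ | K v vK _ IH1 _ IH2 Hsh HK].
  exists [:: S]; split; first exact: facets_powerset.
  by move=> i j /andP[ij]; case: j ij.
case: (IH1 (del_complex (v:=v) HK)) => s1 [P1 S1].
case: (IH2 (link_complex (v:=v) HK)) => s2 [P2 S2].
have m1 : forall F, (F \in s1) = (F \in facets (deletion K v)).
  by move=> F; rewrite (perm_mem P1) mem_enum.
have m2 : forall F, (F \in s2) = (F \in facets (link K v)).
  by move=> F; rewrite (perm_mem P2) mem_enum.
have v1 : forall F, F \in s1 -> v \notin F.
  by move=> F; rewrite m1 => /facetsP[]; rewrite inE => /andP[].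
have v2 : forall F, F \in s2 -> v \notin F.
  by move=> F; rewrite m2 => /facetsP[]; rewrite !inE => /andP[_ /andP[]].
have l2 : forall F, F \in s2 -> F \in deletion K v.
  by move=> F; rewrite m2 => /facetsP[]; rewrite !inE => /andP[FK /andP[vF _]]; rewrite FK vF.
have u1 : uniq s1 by rewrite (perm_uniq P1) enum_uniq.
have u2 : uniq s2 by rewrite (perm_uniq P2) enum_uniq.
exists (s1 ++ [seq v |: G | G <- s2]); split.
  apply: uniq_perm; last 2 first.
  - exact: enum_uniq.
  - move=> F; rewrite mem_enum mem_cat; apply/idP/idP.
      move=> H; apply/(facet_char HK Hsh F); move/orP: H.
      case=> [F1 | /mapP[G G2 ->]]; first by left; rewrite -m1.
      by right; exists G; rewrite -?m2.
    move/(facet_char HK Hsh F) => H; apply/orP; move: H.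
    case=> [F1 | [G G2 ->]]; first by left; rewrite m1.
    by right; apply/mapP; exists G; rewrite ?m2.
  rewrite cat_uniq u1 /=; apply/andP; split.
    apply/hasPn => F /mapP[G G2 ->]; apply/negP => /v1; by rewrite setU11.
  rewrite map_inj_in_uniq // => G1 G2 g1 g2 E.
  by rewrite -(setU1K (v2 _ g1)) E setU1K // v2.
move=> i j /andP[ij js].
rewrite size_cat size_map in js.
case: (ltnP j (size s1)) => j1.
  case: (S1 i j); first by rewrite ij j1.
  move=> l [w [lj wj H1 H2]]; exists l, w.
  have i1 : i < size s1 by apply: ltn_trans ij j1.
  have l1 : l < size s1 by apply: ltn_trans lj j1.
  by rewrite !nth_cat i1 j1 l1.
have j2 : j - size s1 < size s2 by rewrite ltn_subLR.
set G := nth set0 s2 (j - size s1).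
have Gs2 : G \in s2 by apply: mem_nth.
have eJ : nth set0 (s1 ++ [seq v |: G | G <- s2]) j = v |: G.
  by rewrite nth_cat ltnNge j1 /= (nth_map set0).
case: (ltnP i (size s1)) => i1.
  have [F Ff GF] : exists2 F, F \in facets (deletion K v) & G \subset F.
    exact: exists_facet (l2 _ Gs2).
  have Fs1 : F \in s1 by rewrite m1.
  have vF := v1 _ Fs1.
  have vG := v2 _ Gs2.
  have Fi : v \notin nth set0 s1 i by apply: v1; apply: mem_nth.
  exists (index F s1), v; rewrite eJ !nth_cat i1 index_mem Fs1 nth_index //.
  have E : F :&: (v |: G) = (v |: G) :\ v.
    apply/setP => x; rewrite !inE; case: (eqVneq x v) => [-> | xv] /=.
      by rewrite (negbTE vF).
    by case xG: (x \in G); rewrite ?andbT ?andbF // (subsetP GF).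
  split=> //; first by apply: leq_trans j1; rewrite index_mem.
  - by rewrite setU11.
  rewrite E; apply/subsetP => x; rewrite !inE => /andP[xi /orP[xv | xG]].
    by move/eqP: xv xi => ->; rewrite (negbTE Fi).
  rewrite xG orbT andbT; apply: contraNneq Fi => <-; done.
have ij2 : i - size s1 < j - size s1 by rewrite ltn_sub2r // (leq_trans _ ij).
case: (S2 (i - size s1) (j - size s1)); first by rewrite ij2 j2.
move=> l [w [lj wj H1 H2]].
have vG := v2 _ Gs2.
have l2' : l < size s2 by apply: ltn_trans lj j2.
have i2 : i - size s1 < size s2 by apply: ltn_trans ij2 j2.
exists (l + size s1), w; rewrite eJ !nth_cat !ltnNge i1 leq_addl /= addnK !(nth_map set0) //.
split.
- by rewrite -ltnNge; move: lj; rewrite ltn_subRL addnC.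
- exact: setU1r.
- move: H1; rewrite -/G => /subsetP H1; apply/subsetP => x; rewrite !inE => /andP[/orP[xv|xi] /orP[xv'|xj]];
    rewrite ?xv ?xv' //.
  have : x \in nth set0 s2 l :&: G by apply: H1; rewrite inE xi xj.
  by rewrite inE => /andP[-> ->]; rewrite !orbT.
- have wv : w != v by apply: contraNneq vG => <-.
  apply/setP => x; move/setP: H2 => /(_ x); rewrite -/G !inE.
  case: (eqVneq x v) => [-> | xv] /=; first by rewrite eq_sym (negbTE wv).
  done.
Qed.

End Gen.


Lemma nb_cycle (T : finType) (H : rel T) :
  symmetric H -> irreflexive H ->
  (forall u v, H u v -> exists2 w, w != u & H v w) ->
  forall x y, H x y -> exists c : seq T, [&& 3 <= size c, uniq c & cycle H c].
Proof.
move=> Hs Hi Hn x y Hxy.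
suff : forall n, (exists c : seq T, [&& 3 <= size c, uniq c & cycle H c]) \/
   exists y z r, [/\ size r = n, uniq (y :: z :: r) & path H y (z :: r)].
  move=> /(_ #|T|) [Hc | [a [b [r [Sr U _]]]]]; first exact: Hc.
  have h := max_card (mem (a :: b :: r)).
  rewrite (card_uniqP U) in h.
  have hs : size (a :: b :: r) = (size r).+2 by [].
  rewrite hs Sr in h.
  by move: h; rewrite ltnNge leqnSn.
elim=> [|n [Hc|[a [b [r [Sr U P]]]]]]; [|by left|].
  right; exists y, x, [::]; split=> //=.
    by rewrite inE andbT; apply: contraTneq Hxy => ->; rewrite Hi.
  by rewrite andbT Hs.
have Hba : H b a by move: P => /= /andP[]; rewrite Hs.
case: (Hn _ _ Hba) => w wb Haw.
case wr: (w \in b :: r).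
  left; have [p1 [p2 E]] : exists p1 p2, b :: r = p1 ++ w :: p2.
    by case/splitPr: wr => p1 p2; exists p1, p2.
  rewrite E in U P.
  case: p1 E U P => [|z p1] E U P; first by case: E => bw _; move: wb; rewrite bw eqxx.
  exists (a :: rcons (z :: p1) w); apply/and3P; split.
  - by rewrite /= size_rcons.
  - move: U; rewrite -cat_rcons -cat_cons cat_uniq => /andP[]//.
  - rewrite /cycle rcons_path last_rcons Hs Haw andbT.
    by move: P; rewrite -cat_rcons cat_path => /andP[].
right; exists w, a, (b :: r); split=> //=.
- by rewrite Sr.
- move: U => /= /andP[-> /andP[-> ->]]; rewrite !andbT inE negb_or wr andbT.
  by apply: contraTneq Haw => ->; rewrite Hi.
- by rewrite Hs Haw.
Qed.


Section Main.
Variables (V : finType) (D : rel V).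
Hypothesis Dirr : irreflexive D.
Hypothesis noC : ~ (exists c : seq V, [&& 3 <= size c, uniq c & cycle (underlying D) c]).

Definition good (F : {set V * V}) :=
  [forall v, #|[set u | (u, v) \in F]| <= 1] &&
  [forall x, forall y, ~~ (((x, y) \in F) && ((y, x) \in F))].

Lemma goodP (F : {set V * V}) : reflect
  ((forall x y z, (x, z) \in F -> (y, z) \in F -> x = y) /\
   (forall x y, (x, y) \in F -> (y, x) \in F -> False)) (good F).
Proof.
apply: (iffP andP).
  case=> /forallP H1 /forallP H2; split.
    move=> x y z xz yz; have /card_le1_eqP HH := H1 z; apply: HH; by rewrite inE.
  by move=> x y xy yx; have /forallP/(_ y) := H2 x; rewrite xy yx.
case=> H1 H2; split.
  apply/forallP => z; apply/card_le1_eqP => x y; rewrite !inE => a b. exact: (H1 _ _ _ b a).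
apply/forallP => x; apply/forallP => y; apply/negP => /andP[]; exact: H2.
Qed.

Lemma sub_underlying (F : {set V * V}) : F \subset edge_set D ->
  subrel (fun a b => (a, b) \in F) (underlying D).
Proof.
move=> FD a b ab; have := subsetP FD _ ab; rewrite inE /= => Dab.
rewrite /underlying Dab andbT; by apply: contraTneq Dab => ->; rewrite Dirr.
Qed.

Lemma df_good (F : {set V * V}) : F \subset edge_set D -> directed_forest F = good F.
Proof.
move=> FD; rewrite /directed_forest /good; congr andb.
apply/idP/idP.
  move=> /negP Hc; apply/forallP => x; apply/forallP => y; apply/negP => /andP[xy yx].
  apply: Hc; have Uxy := sub_underlying FD xy.
  have xny : x != y by move: Uxy => /andP[].
  have h2 : 2 < #|V|.+1.
    by rewrite ltnS; have := max_card [set x; y]; rewrite cards2 xny.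
  apply/existsP; exists (Ordinal h2); apply/existsP; exists [tuple x; y].
  by rewrite /= inE xny xy yx.
move=> /forallP H; apply/negP => /existsP[n /existsP[t /and3P[n0]]].
case: t => s /eqP Hs /=; move: Hs; case: s => [|a [|b [|c r]]] Hs U C.
- by rewrite -Hs in n0.
- move: C => /= /andP[aa _]; have := sub_underlying FD aa.
  by rewrite /underlying eqxx.
- move: C => /= /and3P[ab ba _]; by have /forallP/(_ b) := H a; rewrite ab ba.
- apply: noC; exists [:: a, b, c & r]; rewrite U /=.
  exact: (sub_cycle (sub_underlying FD) C).
Qed.


Definition CA (A : {set V * V}) : {set {set V * V}} :=
  [set F : {set V * V} | (F \subset A) && good F].

Definition Ex (u v : V) : {set V * V} := [set x : V * V | (x.2 == v) || (x == (v, u))].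

Lemma good_sub (F G : {set V * V}) : G \subset F -> good F -> good G.
Proof.
move=> GF /goodP[H1 H2]; apply/goodP; split.
  by move=> x y z xz yz; apply: (H1 x y z); apply: (subsetP GF).
by move=> x y xy yx; apply: (H2 x y); apply: (subsetP GF).
Qed.

Lemma good_add (G : {set V * V}) (f : V * V) : good G ->
  (forall x, (x, f.2) \notin G) -> (f.2, f.1) \notin G -> f.1 != f.2 -> good (f |: G).
Proof.
case: f => a b /= /goodP[H1 H2] Hin Hanti ab; apply/goodP; split.
  move=> x y z; rewrite !inE !xpair_eqE.
  case/orP=> [/andP[/eqP-> /eqP->] | xz]; case/orP=> [/andP[/eqP-> /eqP zb] | yz] //.
  - by move: Hin => /(_ y); rewrite yz.
  - by move: xz; rewrite zb => xz; move: Hin => /(_ x); rewrite xz.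
  - exact: H1 xz yz.
move=> x y; rewrite !inE !xpair_eqE.
case/orP=> [/andP[/eqP-> /eqP->] | xy]; case/orP=> [/andP[/eqP ya /eqP xb] | yx].
- by move: ab; rewrite ya eqxx.
- by move: Hanti; rewrite yx.
- by move: Hanti; rewrite -ya -xb xy.
- exact: H2 xy yx.
Qed.

Lemma good0 : good set0.
Proof. by apply/goodP; split=> [x y z|x y]; rewrite inE. Qed.

Lemma CA_complex (A : {set V * V}) : is_complex (CA A).
Proof.
move=> F G; rewrite !inE => /andP[FA gF] GF.
by rewrite (subset_trans GF FA) (good_sub GF gF).
Qed.

Lemma delC (A : {set V * V}) (e : V * V) : deletion (CA A) e = CA (A :\ e).
Proof.
by apply/setP => F; rewrite !inE subsetD1 andbAC.
Qed.

Lemma linkC (A : {set V * V}) (u v : V) : u != v -> (u, v) \in A -> link (CA A) (u, v) = CA (A :\: Ex u v).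
Proof.
move=> uv eA; apply/setP => F; rewrite !inE; apply/idP/idP.
  case/andP=> /andP[FA gF] /andP[eF /andP[_ /goodP[H1 H2]]]; rewrite gF andbT.
  apply/subsetP => x xF; rewrite !inE (subsetP FA) // andbT negb_or.
  apply/andP; split.
    apply/negP => /eqP x2; case: x x2 xF => a b /= -> xF.
    have : a = u by apply: (H1 a u v); rewrite !inE ?eqxx ?xF ?orbT.
    by move=> au; move: eF; rewrite -au xF.
  apply/negP => /eqP xvu; apply: (H2 u v); by rewrite !inE ?eqxx // -xvu xF orbT.
case/andP=> FA gF; have FA' : F \subset A.
  apply: subset_trans FA _; apply/subsetP => x; rewrite inE => /andP[].
  done.
have eF : (u, v) \notin F.
  by apply/negP => /(subsetP FA); rewrite !inE eqxx.
rewrite FA' gF eF /=; apply/andP; split.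
  by apply/subsetP => x; rewrite !inE => /orP[/eqP-> //| xF]; apply: (subsetP FA').
apply: good_add => //=.
  by move=> x; apply/negP => /(subsetP FA); rewrite !inE eqxx.
by apply/negP => /(subsetP FA); rewrite !inE eqxx orbT.
Qed.


Lemma shed_ok (A : {set V * V}) (u v : V) (f : V * V) :
  u != v -> (u, v) \in A -> f \in A -> f != (u, v) -> f \in Ex u v ->
  (forall x, (x, f.2) \notin A :\: Ex u v) -> (f.2, f.1) \notin A :\: Ex u v ->
  f.1 != f.2 ->
  forall G, G \in facets (link (CA A) (u, v)) -> G \notin facets (deletion (CA A) (u, v)).
Proof.
move=> uv eA fA fe fEx Hin Hanti f12 G; rewrite linkC // delC.
move=> /facetsP[]; rewrite inE => /andP[GA gG] _; apply/negP => /facetsP[_ Gmax].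
have fG : f \notin G by apply/negP => /(subsetP GA); rewrite inE fEx.
have : f |: G = G.
  apply: Gmax; last exact: subsetUr.
  rewrite inE; apply/andP; split.
    apply/subsetP => x; rewrite !inE => /orP[/eqP-> | xG].
      by rewrite fe fA.
    move: (subsetP GA x xG); rewrite !inE => /andP[xE ->]; rewrite andbT.
    by apply: contra xE => /eqP->; rewrite /= eqxx.
  apply: good_add => //.
    by move=> x; apply/negP => /(subsetP GA); apply/negP; exact: Hin.
  by apply/negP => /(subsetP GA); apply/negP.
by move/setP/(_ f); rewrite !inE eqxx (negbTE fG).
Qed.

Lemma shed_exists (A : {set V * V}) : A \subset edge_set D -> ~~ good A ->
  exists u v f, [/\ u != v, (u, v) \in A, f \in A, f != (u, v) &
    [/\ f \in Ex u v, forall x, (x, f.2) \notin A :\: Ex u v,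
        (f.2, f.1) \notin A :\: Ex u v & f.1 != f.2]].
Proof.
move=> AD ngA.
have irrA : forall x, (x, x) \notin A.
  by move=> x; apply/negP => /(subsetP AD); rewrite inE /= Dirr.
have neqA : forall x y, (x, y) \in A -> x != y.
  by move=> x y xy; apply: contraNneq (irrA x) => E; rewrite {2}E.
destruct (classic (exists u v, [/\ (u, v) \in A, (v, u) \in A &
   forall x, (x, u) \in A -> x = v])) as [[u [v [uv vu Hu]]] | Na].
  exists u, v, (v, u); split=> //.
  - exact: neqA.
  - by rewrite xpair_eqE negb_and eq_sym (neqA _ _ uv).
  split=> /=.
  - by rewrite !inE eqxx orbT.
  - move=> x; rewrite !inE negb_and negbK; apply/orP.
    case xu: ((x, u) \in A); [left; rewrite (Hu x xu) eqxx orbT | by right].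
    done.
  - by rewrite !inE eqxx.
  - by rewrite eq_sym neqA.
destruct (classic (exists u w v, [/\ u != w, (u, v) \in A, (w, v) \in A & (v, w) \notin A]))
  as [[u [w [v [uw uv wv vw]]]] | Nb].
  exists u, v, (w, v); split=> //.
  - exact: neqA.
  - by rewrite xpair_eqE negb_and eq_sym uw.
  split=> /=.
  - by rewrite !inE eqxx.
  - by move=> x; rewrite !inE eqxx.
  - by rewrite !inE negb_and vw orbT.
  - exact: neqA.
exfalso.
pose H := fun x y => ((x, y) \in A) && ((y, x) \in A).
have Hs : symmetric H by move=> x y; rewrite /H andbC.
have Hi : irreflexive H by move=> x; rewrite /H (negbTE (irrA x)).
have nb : forall x y w, x != y -> (x, w) \in A -> (y, w) \in A -> (w, y) \in A.
  move=> x y w xy xw yw; apply/negPn/negP => wy; apply: Nb; by exists x, y, w.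
have Hn : forall a b, H a b -> exists2 w, w != a & H b w.
  move=> a b /andP[ab ba].
  have NF : ~ (forall x, (x, b) \in A -> x = a).
    move=> F; apply: Na; exists b, a; split=> //.
  have [x Hx] := not_all_ex_not _ _ NF.
  have [xb xa] := imply_to_and _ _ Hx.
  have xa' : x != a by apply/eqP.
  exists x => //; rewrite /H xb andbT; apply: (nb a x b) => //; by rewrite eq_sym.
have [x [y Hxy]] : exists x y, H x y.
  apply: NNPP => NH; move/negP: ngA; apply; apply/goodP; split.
    move=> x y z xz yz; apply/eqP/negPn/negP => xy.
    by apply: NH; exists y, z; rewrite /H yz (nb x y z).
  by move=> x y xy yx; apply: NH; exists x, y; rewrite /H xy yx.
have [c /and3P[c3 cu cc]] := nb_cycle Hs Hi Hn Hxy.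
apply: noC; exists c; rewrite c3 cu /=.
apply: sub_cycle cc => a b /andP[ab _]; exact: (sub_underlying AD ab).
Qed.

Lemma vdC : forall n (A : {set V * V}), #|A| <= n -> A \subset edge_set D ->
  vertex_decomposable (CA A).
Proof.
elim=> [|n IH] A cA AD; case gA: (good A).
- apply: vd_simplex; exists A; apply/setP => F; rewrite !inE.
  by case FA: (F \subset A) => //=; apply: good_sub gA.
- have : A = set0 by apply/eqP; rewrite -cards_eq0 -leqn0.
  by move=> A0; move: gA; rewrite A0 good0.
- apply: vd_simplex; exists A; apply/setP => F; rewrite !inE.
  by case FA: (F \subset A) => //=; apply: good_sub gA.
have [u [v [f [uv eA fA fe [fEx Hin Hanti f12]]]]] := shed_exists AD (negbT gA).
have cD : #|A :\ (u, v)| <= n.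
  by move: cA; rewrite (cardsD1 (u, v) A) eA.
have ADe : A :\ (u, v) \subset edge_set D.
  exact: subset_trans (subD1set _ _) AD.
apply: (@vd_shed _ _ (u, v)).
- apply/existsP; exists [set (u, v)]; rewrite set11 andbT inE.
  rewrite sub1set eA /=; rewrite -(setU0 [set (u, v)]).
  apply: good_add => //; [exact: good0 | by move=> x; rewrite inE | by rewrite inE].
- rewrite delC; exact: IH.
- rewrite linkC //; apply: IH.
    apply: leq_trans cD; apply: subset_leq_card; apply/subsetP => x.
    rewrite !inE => /andP[xE ->]; rewrite andbT; apply: contra xE => /eqP->.
    by rewrite /= eqxx.
  exact: subset_trans (subsetDl _ _) AD.
exact: (shed_ok uv eA fA fe fEx Hin Hanti f12).
Qed.

End Main.

Theorem mainTheorem8 (V : finType) (D : rel V) :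
  irreflexive D ->
  essentially_tree D ->
  vertex_decomposable (complex_of_directed_trees D) /\
  shellable (complex_of_directed_trees D).
Proof.
move=> Dirr [_ _ noC].
have E : complex_of_directed_trees D = CA (edge_set D).
  apply/setP => F; rewrite !inE; case FD: (F \subset edge_set D) => //=.
  exact: df_good Dirr noC F FD.
have vd : vertex_decomposable (CA (edge_set D)) by apply: (vdC Dirr noC (leqnn _)).
rewrite E; split=> //; apply: vd_shellable vd _; exact: CA_complex.
Qed.
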